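(* Let $\mathcal{A}$ be a Banach algebra and $X$ a left Banach $\mathcal{A}$-module with action $\pi_\ell:\mathcal{A}\times X\to X$. Then: (i) $\pi_\ell^{****}(x',a'')\in X^*$ for all $x'\in X^*$ and $a''\in\mathcal{A}^{**}$ (where $X^*\subseteq X^{***}$ canonically) if and only if $Z_1(\pi_\ell)=\mathcal{A}^{**}$. (ii) The mapping $x''\mapsto\pi_\ell^{**}(x'',x')$ from $X^{**}$ into $\mathcal{A}^*$ is weak$^*$-to-weak continuous for all $x'\in X^*$ if and only if $Z_1(\pi_\ell)=\mathcal{A}^{**}$. (iii) If for every $x'''\in X^{***}$ the mapping $x''\mapsto\pi_\ell^{*****}(x'',x''')$ from $X^{**}$ (canonically embedded in $X^{****}$) into $\mathcal{A}^{***}$ is weak$^*$-to-weak$^*$ continuous, then for every $a''\in\mathcal{A}^{**}$ the mapping $x''\mapsto\pi_\ell^{***}(a'',x'')$ from $X^{**}$ into $X^{**}$ is weak$^*$-to-weak continuous, and so $Z_1(\pi_\ell)=\mathcal{A}^{**}$.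
   Context: Iterated adjoints of $\pi_\ell$: $\pi_\ell^*:X^*\times\mathcal{A}\to X^*$, $\langle\pi_\ell^*(x',a),x\rangle=\langle x',\pi_\ell(a,x)\rangle$; $\pi_\ell^{**}:X^{**}\times X^*\to\mathcal{A}^*$, $\langle\pi_\ell^{**}(x'',x'),a\rangle=\langle x'',\pi_\ell^*(x',a)\rangle$; $\pi_\ell^{***}:\mathcal{A}^{**}\times X^{**}\to X^{**}$, $\langle\pi_\ell^{***}(a'',x''),x'\rangle=\langle a'',\pi_\ell^{**}(x'',x')\rangle$; $\pi_\ell^{****}:X^{***}\times\mathcal{A}^{**}\to X^{***}$, $\langle\pi_\ell^{****}(x''',a''),x''\rangle=\langle x''',\pi_\ell^{***}(a'',x'')\rangle$; $\pi_\ell^{*****}:X^{****}\times X^{***}\to\mathcal{A}^{***}$, $\langle\pi_\ell^{*****}(x'''',x'''),a''\rangle=\langle x'''',\pi_\ell^{****}(x''',a'')\rangle$. The first topological center is $Z_1(\pi_\ell)=\{a''\in\mathcal{A}^{**}: x''\mapsto\pi_\ell^{***}(a'',x'')\text{ is weak}^*\text{-to-weak}^*\text{ continuous on }X^{**}\}$. ''Weak'' on $\mathcal{A}^*$ means $\sigma(\mathcal{A}^*,\mathcal{A}^{**})$ and on $X^{**}$ means $\sigma(X^{**},X^{***})$. *)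

(* Defs.v *)
From HB Require Import structures.
From mathcomp Require Import all_boot all_order all_algebra.
From mathcomp Require Import all_classical all_reals all_analysis.
From Stdlib Require Import List.
Set Implicit Arguments. Unset Strict Implicit. Unset Printing Implicit Defensive.
Import Order.TTheory GRing.Theory Num.Theory.
Import numFieldNormedType.Exports.
Local Open Scope classical_set_scope.
Local Open Scope ring_scope.

(* A (sub)space of a function-like carrier type, together with its vector
   operations and its norm, given as the relation  nbound v c  <-> ||v|| <= c.
   Iterated (continuous) duals are built from it, so that X^*, X^**, ... are
   the sets of bounded linear functionals on the previous level, with the
   dual (operator) norm. *)
Record nspace (K : numFieldType) := NSpace {
  ncar : Type;
  nmem : set ncar;
  nadd : ncar -> ncar -> ncar;
  nscale : K -> ncar -> ncar;
  nbound : ncar -> K -> Prop }.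
Arguments ncar {K} n.
Arguments nmem {K} n _.
Arguments nadd {K} n _ _.
Arguments nscale {K} n _ _.
Arguments nbound {K} n _ _.

Definition base (K : numFieldType) (V : normedModType K) : nspace K :=
  @NSpace K V setT (fun u v => u + v) (fun k v => k *: v)
    (fun v c => `|v| <= c).

Definition dual_bound (K : numFieldType) (S : nspace K) (f : ncar S -> K) (c : K) :=
  forall v, nmem S v -> forall d, nbound S v d -> `|f v| <= c * d.

Definition lin_on (K : numFieldType) (S : nspace K) (f : ncar S -> K) :=
  (forall u v, nmem S u -> nmem S v -> f (nadd S u v) = f u + f v) /\
  (forall k u, nmem S u -> f (nscale S k u) = k * f u).

Definition dual (K : numFieldType) (S : nspace K) : nspace K :=
  @NSpace K (ncar S -> K)
    (fun f => lin_on f /\ exists M, dual_bound f M)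
    (fun f g v => f v + g v) (fun k f v => k * f v)
    (@dual_bound K S).

(* The weak topology sigma(D, E) on the set memD (of a carrier V) given by the
   pairing p with the elements of memE: U is open iff each point v of U in D
   has a basic neighbourhood {v' in D : |p v' w - p v w| < e, w in s} inside
   U, for some finite family s of elements of E and some e > 0. *)
Definition wopen (K : numFieldType) (V W : Type) (memD : set V) (memE : set W)
    (p : V -> W -> K) (U : set V) :=
  forall v, memD v -> U v ->
    exists (s : list W) (e : K), 0 < e /\ (forall w, In w s -> memE w) /\
      (forall v', memD v' -> (forall w, In w s -> `|p v' w - p v w| < e) -> U v').

Definition wcont (K : numFieldType) (V W V' W' : Type)
    (memD : set V) (memE : set W) (pD : V -> W -> K)
    (memC : set V') (memG : set W') (pC : V' -> W' -> K) (f : V -> V') :=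
  (forall d, memD d -> memC (f d)) /\
  (forall U, wopen memC memG pC U -> wopen memD memE pD (fun d => U (f d))).

Definition ev (K : numFieldType) (V : Type) (F : V -> K) (v : V) := F v.
Definition vee (K : numFieldType) (V : Type) (v : V) (F : V -> K) := F v.

Definition can_emb (K : numFieldType) (V : Type) (v : V) : (V -> K) -> K :=
  fun F => F v.

Section Adjoints.
Variables (K : numFieldType) (A X : Type) (pil : A -> X -> X).
Definition pi1 (x' : X -> K) (a : A) : X -> K := fun x => x' (pil a x).
Definition pi2 (x'' : (X -> K) -> K) (x' : X -> K) : A -> K :=
  fun a => x'' (pi1 x' a).
Definition pi3 (a'' : (A -> K) -> K) (x'' : (X -> K) -> K) : (X -> K) -> K :=
  fun x' => a'' (pi2 x'' x').
Definition pi4 (x''' : ((X -> K) -> K) -> K) (a'' : (A -> K) -> K)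
  : ((X -> K) -> K) -> K := fun x'' => x''' (pi3 a'' x'').
Definition pi5 (x'''' : (((X -> K) -> K) -> K) -> K) (x''' : ((X -> K) -> K) -> K)
  : ((A -> K) -> K) -> K := fun a'' => x'''' (pi4 x''' a'').
End Adjoints.

Definition Z1 (K : numFieldType) (A X : normedModType K) (pil : A -> X -> X)
  : set ((A -> K) -> K) :=
  fun a'' => nmem (dual (dual (base A))) a'' /\
    wcont (nmem (dual (dual (base X)))) (nmem (dual (base X))) (@ev K _)
          (nmem (dual (dual (base X)))) (nmem (dual (base X))) (@ev K _)
          (pi3 pil a'').

Definition banach_algebra (K : numFieldType) (A : completeNormedModType K)
    (mul : A -> A -> A) :=
  (forall a b c, mul (mul a b) c = mul a (mul b c)) /\
  (forall a b c, mul (a + b) c = mul a c + mul b c) /\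
  (forall a b c, mul a (b + c) = mul a b + mul a c) /\
  (forall k a b, mul (k *: a) b = k *: mul a b) /\
  (forall k a b, mul a (k *: b) = k *: mul a b) /\
  (forall a b, `|mul a b| <= `|a| * `|b|).

Definition left_banach_module (K : numFieldType) (A X : completeNormedModType K)
    (mul : A -> A -> A) (pil : A -> X -> X) :=
  (forall a b x, pil (mul a b) x = pil a (pil b x)) /\
  (forall a b x, pil (a + b) x = pil a x + pil b x) /\
  (forall a x y, pil a (x + y) = pil a x + pil a y) /\
  (forall k a x, pil (k *: a) x = k *: pil a x) /\
  (forall k a x, pil a (k *: x) = k *: pil a x) /\
  (exists M, 0 <= M /\ forall a x, `|pil a x| <= M * `|a| * `|x|).

(* Main.v *)
Require Import Defs.
From HB Require Import structures.
From mathcomp Require Import all_boot all_order all_algebra.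
From mathcomp Require Import all_classical all_reals all_analysis.
From Stdlib Require Import List.
Import Order.TTheory GRing.Theory Num.Theory.
Import numFieldNormedType.Exports.
Local Open Scope classical_set_scope.
Local Open Scope ring_scope.

Lemma wopen_ball (K : numFieldType) (V W : Type) (memC : set V) (memG : set W)
  (pC : V -> W -> K) (w : W) (t e : K) :
  memG w -> @Defs.wopen K V W memC memG pC (fun c => `|pC c w - t| < e).
Proof.
move=> Gw v Cv Uv; exists [:: w], (e - `|pC v w - t|).
split; first by rewrite subr_gt0.
split; first by move=> w' [<-|[]].
move=> v' Cv' Hn; have := Hn w (or_introl erefl) => H.
apply: le_lt_trans (ler_distD (pC v w) _ _) _.
by rewrite -ltrBrDr.
Qed.

Lemma wcont_elim (K : numFieldType) (V W V' W' : Type)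
    (memD : set V) (memE : set W) (pD : V -> W -> K)
    (memC : set V') (memG : set W') (pC : V' -> W' -> K) (f : V -> V') :
  @wcont K V W V' W' memD memE pD memC memG pC f -> forall d0, memD d0 -> forall w, memG w ->
  forall e, 0 < e -> exists s e', 0 < e' /\ (forall w, In w s -> memE w) /\
    forall d, memD d -> (forall w', In w' s -> `|pD d w' - pD d0 w'| < e') ->
      `|pC (f d) w - pC (f d0) w| < e.
Proof.
move=> [Hm Hc] d0 Dd0 w Gw e e0.
have := Hc _ (@wopen_ball K V' W' memC memG pC w (pC (f d0) w) e Gw) d0 Dd0.
rewrite subrr normr0 => /(_ e0) [s [e' [e'0 [Hs H]]]].
by exists s, e'.
Qed.

Lemma near_all (K : numFieldType) (V W W' : Type) (memD : set V) (memE : set W)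
  (pD : V -> W -> K) (d0 : V) (P : V -> W' -> Prop) (sC : list W') :
  (forall w, In w sC -> exists s e, 0 < e /\ (forall w, In w s -> memE w) /\
     forall d, memD d -> (forall w', In w' s -> `|pD d w' - pD d0 w'| < e) -> P d w) ->
  exists s e, 0 < e /\ (forall w, In w s -> memE w) /\
     forall d, memD d -> (forall w', In w' s -> `|pD d w' - pD d0 w'| < e) ->
       forall w, In w sC -> P d w.
Proof.
elim: sC => [|w t IH] H.
  by exists nil, 1; split; [exact: ltr01|split=> // ? []].
have [s1 [e1 [e10 [Hs1 H1]]]] := H w (or_introl erefl).
have [s2 [e2 [e20 [Hs2 H2]]]] := IH (fun w' Hw' => H w' (or_intror Hw')).
have cmp : e1 >=< e2 by apply: real_comparable; apply: gtr0_real.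
exists (s1 ++ s2), (Num.min e1 e2); split.
  by rewrite comparable_lt_min // e10 e20.
split.
  by move=> w' Hw; case: (in_app_or _ _ _ Hw); [exact: Hs1|exact: Hs2].
move=> d Dd Hd w' [<-|Hw'].
  apply: H1 => // w'' Hw''; have := Hd w'' (in_or_app _ _ _ (or_introl Hw'')).
  by rewrite comparable_lt_min // => /andP[].
apply: H2 => // w'' Hw''; have := Hd w'' (in_or_app _ _ _ (or_intror Hw'')).
by rewrite comparable_lt_min // => /andP[].
Qed.

Lemma wcont_intro (K : numFieldType) (V W V' W' : Type)
    (memD : set V) (memE : set W) (pD : V -> W -> K)
    (memC : set V') (memG : set W') (pC : V' -> W' -> K) (f : V -> V') :
  (forall d, memD d -> memC (f d)) ->
  (forall d0, memD d0 -> forall w, memG w ->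
  forall e, 0 < e -> exists s e', 0 < e' /\ (forall w, In w s -> memE w) /\
    forall d, memD d -> (forall w', In w' s -> `|pD d w' - pD d0 w'| < e') ->
      `|pC (f d) w - pC (f d0) w| < e) ->
  @wcont K V W V' W' memD memE pD memC memG pC f.
Proof.
move=> Hm Hi; split=> // U HU d0 Dd0 Ud0.
have [sC [eC [eC0 [HsC HU']]]] := HU _ (Hm _ Dd0) Ud0.
have [s [e [e0 [Hs H]]]] := @near_all K V W W' memD memE pD d0
  (fun d w => `|pC (f d) w - pC (f d0) w| < eC) sC
  (fun w Hw => Hi d0 Dd0 w (HsC w Hw) eC eC0).
exists s, e; split=> //; split=> // d Dd Hd.
by apply: HU' (Hm _ Dd) _ => w Hw; apply: H.
Qed.

Lemma dual_add (K : numFieldType) (S : nspace K) f g :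
  nmem (dual S) f -> nmem (dual S) g -> nmem (dual S) (nadd (dual S) f g).
Proof.
move=> [[Hf1 Hf2] [Mf Hf]] [[Hg1 Hg2] [Mg Hg]]; split; first split.
- by move=> u v Su Sv /=; rewrite Hf1 // Hg1 // addrACA.
- by move=> k u Su /=; rewrite Hf2 // Hg2 // mulrDr.
- exists (Mf + Mg) => v Sv d Hd /=; rewrite mulrDl.
  by apply: le_trans (ler_normD _ _) _; apply: lerD; [apply: Hf|apply: Hg].
Qed.

Lemma dual_scale (K : numFieldType) (S : nspace K) k f :
  nmem (dual S) f -> nmem (dual S) (nscale (dual S) k f).
Proof.
move=> [[Hf1 Hf2] [Mf Hf]]; split; first split.
- by move=> u v Su Sv /=; rewrite Hf1 // mulrDr.
- by move=> c u Su /=; rewrite Hf2 // mulrCA.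
- exists (`|k| * Mf) => v Sv d Hd /=; rewrite normrM -mulrA.
  by apply: ler_wpM2l => //; apply: Hf.
Qed.

Lemma dual_zero (K : numFieldType) (S : nspace K) :
  nmem (dual S) (fun _ => 0).
Proof.
split; first split.
- by move=> u v _ _; rewrite addr0.
- by move=> k u _; rewrite mulr0.
- by exists 0 => v _ d _; rewrite normr0 mul0r.
Qed.

Lemma L1 (K : numFieldType) (A X : normedModType K) (pil : A -> X -> X) (M : K) :
  (forall a x y, pil a (x + y) = pil a x + pil a y) ->
  (forall k a x, pil a (k *: x) = k *: pil a x) -> 0 <= M ->
  (forall a x, `|pil a x| <= M * `|a| * `|x|) ->
  forall x' Mx a da, nmem (dual (base X)) x' -> @dual_bound K (base X) x' Mx ->
  `|a| <= da ->
  nmem (dual (base X)) (pi1 pil x' a) /\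
  @dual_bound K (base X) (pi1 pil x' a) (Mx * (M * da)).
Proof.
move=> hxadd hxsc M0 hM x' Mx a da [[Hl1 Hl2] _] Hb ha.
have hb : @dual_bound K (base X) (pi1 pil x' a) (Mx * (M * da)).
  move=> x _ d /= hd; rewrite /pi1.
  have h : `|pil a x| <= M * da * d.
    apply: le_trans (hM a x) _; rewrite -!mulrA; apply: ler_wpM2l => //.
    by apply: ler_pM.
  by have := Hb _ I _ h; rewrite !mulrA.
split=> //; split; first split.
- by move=> u v _ _ /=; rewrite /pi1 /= hxadd; exact: (Hl1 _ _ I I).
- by move=> k u _ /=; rewrite /pi1 /= hxsc; exact: (Hl2 _ _ I).
- by exists (Mx * (M * da)).
Qed.

Lemma L2 (K : numFieldType) (A X : normedModType K) (pil : A -> X -> X) (M : K) :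
  (forall a b x, pil (a + b) x = pil a x + pil b x) ->
  (forall k a x, pil (k *: a) x = k *: pil a x) ->
  (forall a x y, pil a (x + y) = pil a x + pil a y) ->
  (forall k a x, pil a (k *: x) = k *: pil a x) -> 0 <= M ->
  (forall a x, `|pil a x| <= M * `|a| * `|x|) ->
  forall x'' c x' Mx, nmem (dual (dual (base X))) x'' ->
  @dual_bound K (dual (base X)) x'' c ->
  nmem (dual (base X)) x' -> @dual_bound K (base X) x' Mx ->
  nmem (dual (base A)) (pi2 pil x'' x') /\
  @dual_bound K (base A) (pi2 pil x'' x') (c * (Mx * M)).
Proof.
move=> hadd hsc hxadd hxsc M0 hM x'' c x' Mx [[H1 H2] _] Hc X1x' Hx'.
have L := @L1 K A X pil M hxadd hxsc M0 hM.
have [[Lx1 Lx2] _] := X1x'.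
have hb : @dual_bound K (base A) (pi2 pil x'' x') (c * (Mx * M)).
  move=> a _ da /= ha; rewrite /pi2.
  have [m1 m2] := L x' Mx a da X1x' Hx' ha.
  by have := Hc _ m1 _ m2; rewrite !mulrA.
split=> //; split; first split.
- move=> a b _ _ /=; rewrite /pi2.
  have -> : pi1 pil x' (a + b) =
            nadd (dual (base X)) (pi1 pil x' a) (pi1 pil x' b).
    by apply: funext => x /=; rewrite /pi1 hadd; exact: (Lx1 _ _ I I).
  exact: (H1 _ _ (L x' Mx a _ X1x' Hx' (lexx _)).1
                 (L x' Mx b _ X1x' Hx' (lexx _)).1).
- move=> k a _ /=; rewrite /pi2.
  have -> : pi1 pil x' (k *: a) = nscale (dual (base X)) k (pi1 pil x' a).
    by apply: funext => x /=; rewrite /pi1 hsc; exact: (Lx2 _ _ I).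
  exact: (H2 _ _ (L x' Mx a _ X1x' Hx' (lexx _)).1).
- by exists (c * (Mx * M)).
Qed.

Lemma L3 (K : numFieldType) (A X : normedModType K) (pil : A -> X -> X) (M : K) :
  (forall a b x, pil (a + b) x = pil a x + pil b x) ->
  (forall k a x, pil (k *: a) x = k *: pil a x) ->
  (forall a x y, pil a (x + y) = pil a x + pil a y) ->
  (forall k a x, pil a (k *: x) = k *: pil a x) -> 0 <= M ->
  (forall a x, `|pil a x| <= M * `|a| * `|x|) ->
  forall a'' ca x'' c, nmem (dual (dual (base A))) a'' ->
  @dual_bound K (dual (base A)) a'' ca ->
  nmem (dual (dual (base X))) x'' -> @dual_bound K (dual (base X)) x'' c ->
  nmem (dual (dual (base X))) (pi3 pil a'' x'') /\
  @dual_bound K (dual (base X)) (pi3 pil a'' x'') (ca * (c * M)).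
Proof.
move=> hadd hsc hxadd hxsc M0 hM a'' ca x'' c [[H1 H2] _] Hca X2x'' Hc.
have L := @L1 K A X pil M hxadd hxsc M0 hM.
have L' := @L2 K A X pil M hadd hsc hxadd hxsc M0 hM.
have [[Hx1 Hx2] _] := X2x''.
have hb : @dual_bound K (dual (base X)) (pi3 pil a'' x'') (ca * (c * M)).
  move=> x' X1x' d /= hd; rewrite /pi3.
  have [m1 m2] := L' x'' c x' d X2x'' Hc X1x' hd.
  by have := Hca _ m1 _ m2; rewrite [d * M]mulrC !mulrA.
split=> //; split; first split.
- move=> u v Xu Xv /=; rewrite /pi3.
  have [Mu Hu] := Xu.2; have [Mv Hv] := Xv.2.
  have -> : pi2 pil x'' (nadd (dual (base X)) u v) =
            nadd (dual (base A)) (pi2 pil x'' u) (pi2 pil x'' v).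
    apply: funext => a /=; rewrite /pi2.
    exact: (Hx1 _ _ (L u Mu a _ Xu Hu (lexx _)).1 (L v Mv a _ Xv Hv (lexx _)).1).
  exact: (H1 _ _ (L' x'' c u Mu X2x'' Hc Xu Hu).1 (L' x'' c v Mv X2x'' Hc Xv Hv).1).
- move=> k u Xu /=; rewrite /pi3.
  have [Mu Hu] := Xu.2.
  have -> : pi2 pil x'' (nscale (dual (base X)) k u) =
            nscale (dual (base A)) k (pi2 pil x'' u).
    apply: funext => a /=; rewrite /pi2.
    exact: (Hx2 _ _ (L u Mu a _ Xu Hu (lexx _)).1).
  exact: (H2 _ _ (L' x'' c u Mu X2x'' Hc Xu Hu).1).
- by exists (ca * (c * M)).
Qed.

Lemma Lemb (K : numFieldType) (X : normedModType K) (x' : X -> K) :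
  nmem (dual (base X)) x' ->
  nmem (dual (dual (dual (base X)))) (@can_emb K _ x').
Proof.
move=> X1x'; have [Mx Hx] := X1x'.2.
split; first split.
- by [].
- by [].
- exists Mx => v Xv d Hd /=; rewrite /can_emb mulrC.
  exact: (Hd x' X1x' Mx Hx).
Qed.

Arguments wcont_elim {K V W V' W' memD memE pD memC memG pC f}.
Arguments wcont_intro {K V W V' W' memD memE pD memC memG pC f}.

Lemma kernel (K : numFieldType) (V W : Type) (memV : set V) (add : V -> V -> V)
  (scale : K -> V -> V) (p : V -> W -> K) (ws : list W) :
  (forall u v, memV u -> memV v -> memV (add u v)) ->
  (forall k u, memV u -> memV (scale k u)) ->
  (forall u v w, memV u -> memV v -> p (add u v) w = p u w + p v w) ->
  (forall k u w, memV u -> p (scale k u) w = k * p u w) ->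
  forall phi : V -> K,
  (forall u v, memV u -> memV v -> phi (add u v) = phi u + phi v) ->
  (forall k u, memV u -> phi (scale k u) = k * phi u) ->
  (forall v, memV v -> (forall w, In w ws -> p v w = 0) -> phi v = 0) ->
  exists l : list (K * W), (forall q, In q l -> In q.2 ws) /\
    forall v, memV v -> phi v = foldr (fun q acc => q.1 * p v q.2 + acc) 0 l.
Proof.
move=> Cadd Csc padd psc; elim: ws => [|w ws IH] phi Hadd Hsc Hk.
  by exists nil; split => // v Vv; apply: Hk.
case: (pselect (exists v0, memV v0 /\ (forall w', In w' ws -> p v0 w' = 0) /\
                           p v0 w != 0)).
  move=> [v0 [V0 [Z0 N0]]].
  have [v1 [V1 [P1w P1ws]]] : exists v1, memV v1 /\ p v1 w = 1 /\
      (forall w', In w' ws -> p v1 w' = 0).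
    exists (scale (p v0 w)^-1 v0); split; first by apply: Csc.
    split; first by rewrite psc // mulVf.
    by move=> w' Hw'; rewrite psc // (Z0 w' Hw') mulr0.
  pose phi' v := phi v - phi v1 * p v w.
  have h1 : forall u v, memV u -> memV v -> phi' (add u v) = phi' u + phi' v.
    move=> u v Vu Vv; rewrite /phi' Hadd // padd // mulrDr.
    by rewrite opprD addrACA.
  have h2 : forall k u, memV u -> phi' (scale k u) = k * phi' u.
    by move=> k u Vu; rewrite /phi' Hsc // psc // mulrBr mulrCA.
  have h3 : forall v, memV v -> (forall w, In w ws -> p v w = 0) -> phi' v = 0.
    move=> v Vv Hv.
    pose u := add v (scale (- p v w) v1).
    have Vu : memV u by apply: Cadd => //; apply: Csc.
    have Hu : forall w', In w' (w :: ws) -> p u w' = 0.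
      move=> w' [<-|Hw']; rewrite /u padd // ?psc //; try by apply: Csc.
        by rewrite P1w mulr1 subrr.
      by rewrite Hv // P1ws // mulr0 addr0.
    have := Hk u Vu Hu; rewrite /u Hadd //; last by apply: Csc.
    rewrite Hsc // mulNr => /eqP; rewrite subr_eq0 mulrC => /eqP E.
    by rewrite /phi' E subrr.
  have [l [Hl Hphi]] := IH phi' h1 h2 h3.
  exists ((phi v1, w) :: l); split.
    by move=> q [<-|Hq]; [left|right; apply: Hl].
  by move=> v Vv /=; rewrite -Hphi // /phi' addrC subrK.
move=> Hno.
have h3 : forall v, memV v -> (forall w, In w ws -> p v w = 0) -> phi v = 0.
  move=> v Vv Hv; apply: Hk => // w' [<-|]; last exact: Hv.
  case: (eqVneq (p v w) 0) => // Hne; exfalso; apply: Hno.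
  by exists v.
have [l [Hl Hphi]] := IH phi Hadd Hsc h3.
by exists l; split => // q Hq; right; apply: Hl.
Qed.

Lemma dual_at0 (K : numFieldType) (S : nspace K) (F : ncar (dual S) -> K) :
  (forall k u, nmem (dual S) u -> F (nscale (dual S) k u) = k * F u) ->
  F (fun _ => 0) = 0.
Proof.
move=> H; have := H 0 _ (@dual_zero K S).
have -> : nscale (dual S) 0 (fun _ => 0) = (fun _ => 0).
  by apply: funext => v /=; rewrite mul0r.
by rewrite mul0r.
Qed.

Arguments dual_add {K S f g}.
Arguments dual_scale {K S} k {f}.
Arguments dual_zero {K S}.
Arguments Lemb {K X x'}.

Theorem theorem2p7 (K : numFieldType) (A X : completeNormedModType K)
  (mul : A -> A -> A) (pil : A -> X -> X) :
  banach_algebra mul -> left_banach_module mul pil ->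
  let A2 := nmem (dual (dual (base A))) in
  let A3 := nmem (dual (dual (dual (base A)))) in
  let X1 := nmem (dual (base X)) in
  let X2 := nmem (dual (dual (base X))) in
  let X3 := nmem (dual (dual (dual (base X)))) in
  (* (i) *)
  ((forall (x' : X -> K) (a'' : (A -> K) -> K), X1 x' -> A2 a'' ->
      exists y' : X -> K, X1 y' /\
        forall x'' : (X -> K) -> K, X2 x'' -> pi4 pil (@can_emb K _ x') a'' x'' = @can_emb K _ y' x'')
   <-> Z1 pil = A2) /\
  (* (ii) *)
  ((forall x' : X -> K, X1 x' ->
      wcont X2 X1 (@ev K _) (nmem (dual (base A))) A2 (@vee K _)
            (fun x'' : (X -> K) -> K => pi2 pil x'' x'))
   <-> Z1 pil = A2) /\
  (* (iii) *)
  ((forall x''' : ((X -> K) -> K) -> K, X3 x''' ->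
      wcont X2 X1 (@ev K _) A3 A2 (@ev K _)
            (fun x'' : (X -> K) -> K => pi5 pil (@can_emb K _ x'') x'''))
   -> (forall a'' : (A -> K) -> K, A2 a'' ->
        wcont X2 X1 (@ev K _) X2 X3 (@vee K _) (pi3 pil a''))
      /\ Z1 pil = A2).
Proof.
move=> _ [_ [hadd [hxadd [hsc [hxsc [M [M0 hM]]]]]]] A2 A3 X1 X2 X3.
have map3 : forall a'', A2 a'' -> forall x'', X2 x'' -> X2 (pi3 pil a'' x'').
  move=> a'' Aa x'' Xx; have [ca Hca] := Aa.2; have [c Hc] := Xx.2.
  exact: (@L3 K A X pil M hadd hsc hxadd hxsc M0 hM a'' ca x'' c Aa Hca Xx Hc).1.
have map2 : forall x'', X2 x'' -> forall x', X1 x' ->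
    nmem (dual (base A)) (pi2 pil x'' x').
  move=> x'' Xx x' X1x'; have [c Hc] := Xx.2; have [Mx Hx] := X1x'.2.
  exact: (@L2 K A X pil M hadd hsc hxadd hxsc M0 hM x'' c x' Mx Xx Hc X1x' Hx).1.
have Zeq : (forall a'', A2 a'' ->
    wcont X2 X1 (@ev K _) X2 X1 (@ev K _) (pi3 pil a'')) -> Z1 pil = A2.
  move=> H; apply: funext => a''; apply: propext; split; first by case.
  by move=> Aa; split => //; apply: H.
have Zuse : Z1 pil = A2 -> forall a'', A2 a'' ->
    wcont X2 X1 (@ev K _) X2 X1 (@ev K _) (pi3 pil a'').
  by move=> E a'' Aa; rewrite -E in Aa; case: Aa.
split; [|split].
- split.
  + move=> Hrep; apply: Zeq => a'' Aa; apply: wcont_intro; first exact: map3.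
    move=> d0 D0 x' X1x' e e0.
    have [y' [Y1 Hy]] := Hrep x' a'' X1x' Aa.
    exists [:: y'], e; split => //; split; first by move=> w [<-|[]].
    move=> d Dd Hd; have h := Hd y' (or_introl erefl).
    change (`|pi4 pil (@can_emb K _ x') a'' d - pi4 pil (@can_emb K _ x') a'' d0| < e).
    by rewrite !Hy.
  + move=> E x' a'' X1x' Aa.
    have hc := Zuse E a'' Aa.
    have Z2 : X2 (fun _ => 0) := dual_zero.
    have [s [e' [e'0 [Hs Hn]]]] := wcont_elim hc (fun _ => 0) Z2 x' X1x' 1 ltr01.
    have pz : pi3 pil a'' (fun _ => 0) x' = 0.
      rewrite /pi3; have -> : pi2 pil (fun _ => 0) x' = (fun _ => 0) by [].
      exact: (@dual_at0 K (base A) a'' Aa.1.2).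
    pose phi x'' := a'' (pi2 pil x'' x').
    have phiadd : forall u v, X2 u -> X2 v ->
        phi (nadd (dual (dual (base X))) u v) = phi u + phi v.
      by move=> u v Xu Xv; exact: Aa.1.1 _ _ (map2 _ Xu _ X1x') (map2 _ Xv _ X1x').
    have phisc : forall k u, X2 u ->
        phi (nscale (dual (dual (base X))) k u) = k * phi u.
      by move=> k u Xu; exact: Aa.1.2 _ _ (map2 _ Xu _ X1x').
    have hk : forall v, X2 v -> (forall w, In w s -> v w = 0) -> phi v = 0.
      move=> v Xv Hv; case: (eqVneq (phi v) 0) => // Hne; exfalso.
      have Xk := dual_scale (phi v)^-1 Xv.
      have hh : forall w', In w' s ->
          `|ev (nscale (dual (dual (base X))) (phi v)^-1 v) w' - ev (fun _ => 0) w'| < e'.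
        by move=> w Hw; rewrite /ev /= Hv // mulr0 subrr normr0.
      have := Hn _ Xk hh.
      change (`|phi (nscale (dual (dual (base X))) (phi v)^-1 v) -
                pi3 pil a'' (fun _ => 0) x'| < 1 -> False).
      by rewrite pz subr0 phisc // mulVf // normr1 ltxx.
    have [l [Hl Hphi]] := @kernel K _ _ X2 (nadd (dual (dual (base X))))
      (nscale (dual (dual (base X)))) (fun x'' w => x'' w) s
      (fun u v Xu Xv => dual_add Xu Xv) (fun k u Xu => dual_scale k Xu)
      (fun u v w _ _ => erefl) (fun k u w _ => erefl) phi phiadd phisc hk.
    have Ymem : forall l0 : list (K * (X -> K)), (forall q, In q l0 -> X1 q.2) ->
        X1 (fun x => foldr (fun q acc => q.1 * q.2 x + acc) 0 l0).
      elim=> [|q l0 IH] Hq; first exact: dual_zero.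
      exact: (dual_add (dual_scale q.1 (Hq q (or_introl erefl)))
                       (IH (fun q' h => Hq q' (or_intror h)))).
    have Yval : forall x'', X2 x'' -> forall l0 : list (K * (X -> K)),
        (forall q, In q l0 -> X1 q.2) ->
        x'' (fun x => foldr (fun q acc => q.1 * q.2 x + acc) 0 l0) =
        foldr (fun q acc => q.1 * x'' q.2 + acc) 0 l0.
      move=> x'' Xx; elim=> [|q l0 IH] Hq.
        exact: (@dual_at0 K (base X) x'' Xx.1.2).
      have E1 := Xx.1.1 _ _ (dual_scale q.1 (Hq q (or_introl erefl)))
                            (Ymem l0 (fun q' h => Hq q' (or_intror h))).
      rewrite /= -IH; last by move=> q' h; apply: Hq; right.
      rewrite -(Xx.1.2 _ _ (Hq q (or_introl erefl))).
      exact: E1.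
    have Hq : forall q, In q l -> X1 q.2 by move=> q h; apply: Hs; apply: Hl.
    exists (fun x => foldr (fun q acc => q.1 * q.2 x + acc) 0 l).
    split; first exact: Ymem.
    move=> x'' Xx.
    change (phi x'' = x'' (fun x => foldr (fun q acc => q.1 * q.2 x + acc) 0 l)).
    rewrite Yval //; exact: Hphi x'' Xx.
- split.
  + move=> H; apply: Zeq => a'' Aa; apply: wcont_intro; first exact: map3.
    move=> d0 D0 x' X1x' e e0.
    have [s [e' [e'0 [Hs Hn]]]] := wcont_elim (H x' X1x') d0 D0 a'' Aa e e0.
    by exists s, e'; split => //; split => // d Dd Hd; apply: Hn.
  + move=> E x' X1x'; apply: wcont_intro; first by move=> d Dd; apply: map2.
    move=> d0 D0 a'' Aa e e0.
    have [s [e' [e'0 [Hs Hn]]]] := wcont_elim (Zuse E a'' Aa) d0 D0 x' X1x' e e0.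
    by exists s, e'; split => //; split => // d Dd Hd; apply: Hn.
- move=> H.
  have P1 : forall a'', A2 a'' -> wcont X2 X1 (@ev K _) X2 X3 (@vee K _) (pi3 pil a'').
    move=> a'' Aa; apply: wcont_intro; first exact: map3.
    move=> d0 D0 x''' X3x e e0.
    have [s [e' [e'0 [Hs Hn]]]] := wcont_elim (H x''' X3x) d0 D0 a'' Aa e e0.
    by exists s, e'; split => //; split => // d Dd Hd; apply: Hn.
  split => //; apply: Zeq => a'' Aa; apply: wcont_intro; first exact: map3.
  move=> d0 D0 x' X1x' e e0.
  have [s [e' [e'0 [Hs Hn]]]] := wcont_elim (P1 a'' Aa) d0 D0 _ (Lemb X1x') e e0.
  by exists s, e'; split => //; split => // d Dd Hd; apply: Hn.
Qed.
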